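(* Let $T:[a,b]\times[c,d]\to\mathbb{R}$ be the function constructed from a generating function $\phi$ as described in the context. If there is $y_0\in[c,d]$ such that $x\mapsto\phi(x,y_0)$ is non-constant on $[a_0,a_1]$, then $T$ is not of bounded variation in the sense of Arzelà on $[a,b]\times[c,d]$.
   Context: Let $a<b$, $c<d$. Set $a_0=a$ and $a_n=a+(b-a)(\tfrac12+\tfrac14+\dots+\tfrac1{2^n})$ for $n\in\mathbb{N}$, so $a_n\uparrow b$. Let $\phi:[a_0,a_1]\times[c,d]\to\mathbb{R}$ be continuous with $\phi(a_0,y)=\phi(a_1,y)$ for all $y\in[c,d]$ (the generating function). For $n\ge1$ let $\psi_n:[a_{n-1},a_n]\to[a_0,a_1]$ be the increasing affine bijection $\psi_n(x)=\frac{2^n[(a_1-a_0)x+a_0a_n-a_1a_{n-1}]}{b-a}$. Let $F_1=\phi$ on $[a_0,a_1]\times[c,d]$ and for $n\ge2$, $F_n(x,y)=\frac1n\phi(\psi_n(x),y)+\frac{n-1}{n}\phi(a_0,y)$ for $(x,y)\in[a_{n-1},a_n]\times[c,d]$. Define $T_n(x,y)=F_k(x,y)$ for $(x,y)\in[a_{k-1},a_k]\times[c,d]$, $k=1,\dots,n$, and $T_n(x,y)=F_n(a_n,y)$ for $(x,y)\in[a_n,b]\times[c,d]$; and $T(x,y)=\lim_{n\to\infty}T_n(x,y)$. A function $f:[a,b]\times[c,d]\to\mathbb{R}$ is of bounded variation in the sense of Arzelà if there is $K$ such that for all $m$ and all $a=x_0\le\dots\le x_m=b$, $c=y_0\le\dots\le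 y_m=d$, $\sum_{i=0}^{m-1}|f(x_{i+1},y_{i+1})-f(x_i,y_i)|\le K$. *)

(* Defs.v *)
From Stdlib Require Import Reals Lra.
From Coquelicot Require Import Coquelicot.
Open Scope R_scope.

Fixpoint rsum (g : nat -> R) (m : nat) : R :=
  match m with O => 0 | S k => rsum g k + g k end.

Definition geo (n : nat) : R := rsum (fun k => / 2 ^ (S k)) n.

Definition seq_a (a b : R) (n : nat) : R := a + (b - a) * geo n.

Definition psi (a b : R) (n : nat) (x : R) : R :=
  2 ^ n * ((seq_a a b 1 - seq_a a b 0) * x
           + seq_a a b 0 * seq_a a b n - seq_a a b 1 * seq_a a b (pred n)) / (b - a).

Definition Fn (a b : R) (phi : R -> R -> R) (n : nat) (x y : R) : R :=
  match n with
  | O | S O => phi x y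
  | _ => / INR n * phi (psi a b n x) y + (INR n - 1) / INR n * phi (seq_a a b 0) y
  end.

(* piecewise gluing of F_1, ..., F_n on [a_0, a_n]:
   equal to F_k on [a_{k-1}, a_k] (the pieces agree at the junction points) *)
Fixpoint Gpieces (a b : R) (phi : R -> R -> R) (n : nat) (x y : R) : R :=
  match n with
  | O | S O => Fn a b phi 1 x y
  | S m => if Rle_dec x (seq_a a b m) then Gpieces a b phi m x y
           else Fn a b phi (S m) x y
  end.

Definition Tn (a b : R) (phi : R -> R -> R) (n : nat) (x y : R) : R :=
  if Rle_dec x (seq_a a b n) then Gpieces a b phi n x y
  else Fn a b phi n (seq_a a b n) y.

(* T = pointwise limit of T_n (index shifted so the sequence starts at T_1) *)
Definition Tlim (a b : R) (phi : R -> R -> R) (x y : R) : R :=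
  real (Lim_seq (fun n => Tn a b phi (S n) x y)).

Definition cont_on_rect (f : R -> R -> R) (a1 b1 c d : R) : Prop :=
  forall x y, a1 <= x <= b1 -> c <= y <= d ->
  forall eps, 0 < eps -> exists delta, 0 < delta /\
    forall x' y', a1 <= x' <= b1 -> c <= y' <= d ->
      Rabs (x' - x) < delta -> Rabs (y' - y) < delta ->
      Rabs (f x' y' - f x y) < eps.

Definition arzela_BV (f : R -> R -> R) (a b c d : R) : Prop :=
  exists K : R, forall (m : nat) (xs ys : nat -> R),
    xs O = a -> xs m = b -> ys O = c -> ys m = d ->
    (forall i, (i < m)%nat -> xs i <= xs (S i)) ->
    (forall i, (i < m)%nat -> ys i <= ys (S i)) ->
    rsum (fun i => Rabs (f (xs (S i)) (ys (S i)) - f (xs i) (ys i))) m <= K.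

(* Main.v *)
From Stdlib Require Import Reals Lra Lia Arith.
From Coquelicot Require Import Coquelicot.
Require Import Defs.
Open Scope R_scope.

Lemma pow2_pos n : 0 < 2 ^ n.
Proof. apply pow_lt; lra. Qed.

Lemma geo_eq n : geo n = 1 - / 2 ^ n.
Proof.
  unfold geo. induction n as [|n IH]; cbn [rsum].
  - simpl. field.
  - rewrite IH. simpl pow. field. apply pow_nonzero; lra.
Qed.

Lemma seqA a b n : seq_a a b n = b - (b - a) / 2 ^ n.
Proof. unfold seq_a; rewrite geo_eq; field; apply pow_nonzero; lra. Qed.

Lemma A0 a b : seq_a a b 0 = a.
Proof. rewrite seqA; simpl; field. Qed.

Lemma A1 a b : seq_a a b 1 = a + (b - a) / 2.
Proof. rewrite seqA; simpl; field. Qed.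

Lemma psi_eq a b m x : a < b ->
  psi a b (S m) x = 2 ^ m * (x - seq_a a b m) + a.
Proof.
  intros Hab. unfold psi. simpl pred. rewrite !seqA. simpl pow.
  field. split; [apply pow_nonzero; lra | lra].
Qed.

Lemma A_le_S a b n : a < b -> seq_a a b n <= seq_a a b (S n).
Proof.
  intros Hab. rewrite !seqA. simpl pow.
  assert (0 < (b - a) / 2 ^ n) by (apply Rdiv_lt_0_compat; [lra| apply pow2_pos]).
  replace ((b - a) / (2 * 2 ^ n)) with ((b - a) / 2 ^ n / 2)
    by (field; apply pow_nonzero; lra).
  lra.
Qed.

Lemma A_mono a b n k : a < b -> (n <= k)%nat -> seq_a a b n <= seq_a a b k.
Proof.
  intros Hab H. induction H. lra. eapply Rle_trans; [exact IHle| apply A_le_S; lra].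
Qed.

Lemma A_le_b a b n : a < b -> seq_a a b n <= b.
Proof.
  intros Hab. rewrite seqA.
  assert (0 < (b - a) / 2 ^ n) by (apply Rdiv_lt_0_compat; [lra| apply pow2_pos]).
  lra.
Qed.

Lemma Fn_left a b c d phi m y : a < b -> c <= y <= d ->
  Fn a b phi (S m) (seq_a a b m) y = phi a y.
Proof.
  intros Hab Hy. destruct m.
  - cbn [Fn]. rewrite A0. reflexivity.
  - cbn [Fn]. rewrite psi_eq by lra.
    replace (2 ^ S m * (seq_a a b (S m) - seq_a a b (S m)) + a) with a by ring.
    rewrite A0. field. apply not_0_INR. lia.
Qed.

Lemma Fn_right a b c d phi k y : a < b -> c <= y <= d ->
  (forall y, c <= y <= d -> phi (seq_a a b 0) y = phi (seq_a a b 1) y) ->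
  Fn a b phi (S k) (seq_a a b (S k)) y = phi a y.
Proof.
  intros Hab Hy Hper. destruct k.
  - cbn [Fn]. rewrite <- Hper by lra. rewrite A0. reflexivity.
  - cbn [Fn]. rewrite psi_eq by lra.
    replace (2 ^ S k * (seq_a a b (S (S k)) - seq_a a b (S k)) + a) with (seq_a a b 1).
    2:{ rewrite !seqA. simpl pow. field. apply pow_nonzero; lra. }
    rewrite <- Hper by lra. rewrite A0. field. apply not_0_INR. lia.
Qed.

Lemma Gp_base a b c d phi k x y : a < b -> c <= y <= d ->
  (forall y, c <= y <= d -> phi (seq_a a b 0) y = phi (seq_a a b 1) y) ->
  seq_a a b k <= x <= seq_a a b (S k) ->
  Gpieces a b phi (S k) x y = Fn a b phi (S k) x y.
Proof.
  intros Hab Hy Hper. revert x. induction k; intros x Hx.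
  - reflexivity.
  - change (Gpieces a b phi (S (S k)) x y) with
      (if Rle_dec x (seq_a a b (S k)) then Gpieces a b phi (S k) x y
       else Fn a b phi (S (S k)) x y).
    destruct (Rle_dec x (seq_a a b (S k))) as [Hle|Hle]; [|reflexivity].
    assert (x = seq_a a b (S k)) by lra. subst x.
    rewrite IHk by (split; [apply A_le_S; lra | lra]).
    rewrite (Fn_right a b c d) by assumption.
    rewrite (Fn_left a b c d) by assumption. reflexivity.
Qed.

Lemma Gp_up a b phi k n x y : a < b -> (S k <= n)%nat ->
  x <= seq_a a b (S k) ->
  Gpieces a b phi n x y = Gpieces a b phi (S k) x y.
Proof.
  intros Hab H Hx. induction H. reflexivity.
  destruct m as [|m]; [lia|].
  change (Gpieces a b phi (S (S m)) x y) with
      (if Rle_dec x (seq_a a b (S m)) then Gpieces a b phi (S m) x y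
       else Fn a b phi (S (S m)) x y).
  destruct (Rle_dec x (seq_a a b (S m))) as [Hle|Hle]; [exact IHle|].
  exfalso. apply Hle. eapply Rle_trans; [exact Hx| apply A_mono; [lra|lia]].
Qed.

Lemma Tlim_val a b c d phi k x y : a < b -> c <= y <= d ->
  (forall y, c <= y <= d -> phi (seq_a a b 0) y = phi (seq_a a b 1) y) ->
  seq_a a b k <= x <= seq_a a b (S k) ->
  Tlim a b phi x y = Fn a b phi (S k) x y.
Proof.
  intros Hab Hy Hper Hx. unfold Tlim.
  rewrite <- (Lim_seq_incr_n (fun n => Tn a b phi (S n) x y) (S k)).
  rewrite (Lim_seq_ext _ (fun _ => Fn a b phi (S k) x y)).
  - rewrite Lim_seq_const. reflexivity.
  - intro n. unfold Tn.
    destruct (Rle_dec x (seq_a a b (S (n + S k)))) as [Hle|Hle].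
    + rewrite (Gp_up a b phi k); [| lra | lia | apply Hx].
      apply (Gp_base a b c d); assumption.
    + exfalso. apply Hle. eapply Rle_trans; [apply Hx| apply A_mono; [lra|lia]].
Qed.

Definition pt2 (a b : R) (k : nat) (w : R) : R := seq_a a b k + (w - a) / 2 ^ k.

Lemma pt2_in a b k w : a < b -> a <= w <= seq_a a b 1 ->
  seq_a a b k <= pt2 a b k w <= seq_a a b (S k).
Proof.
  intros Hab Hw. rewrite A1 in Hw. unfold pt2.
  assert (Ht := pow2_pos k).
  assert (0 <= (w - a) / 2 ^ k) by (apply Rdiv_le_0_compat; lra).
  assert ((w - a) / 2 ^ k <= (b - a) / 2 / 2 ^ k).
  { unfold Rdiv. apply Rmult_le_compat_r. left; apply Rinv_0_lt_compat; lra. lra. }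
  rewrite (seqA a b (S k)), (seqA a b k). simpl pow.
  replace ((b - a) / (2 * 2 ^ k)) with ((b - a) / 2 ^ k - (b - a) / 2 / 2 ^ k)
    by (field; lra).
  lra.
Qed.

Lemma pt2_mono a b k u v : u <= v -> pt2 a b k u <= pt2 a b k v.
Proof.
  intros H. unfold pt2. assert (Ht := pow2_pos k).
  unfold Rdiv. apply Rplus_le_compat_l. apply Rmult_le_compat_r.
  left; apply Rinv_0_lt_compat; lra. lra.
Qed.

Lemma Fn_pt2 a b phi k w y : a < b ->
  Fn a b phi (S k) (pt2 a b k w) y = / INR (S k) * phi w y + (1 - / INR (S k)) * phi a y.
Proof.
  intros Hab. destruct k.
  - cbn [Fn]. unfold pt2. rewrite A0. simpl pow. simpl INR.
    replace (a + (w - a) / 1) with w by field. rewrite Rinv_1. ring.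
  - cbn [Fn]. rewrite psi_eq by lra. unfold pt2.
    replace (2 ^ S k * (seq_a a b (S k) + (w - a) / 2 ^ S k - seq_a a b (S k)) + a) with w
      by (field; apply pow_nonzero; lra).
    rewrite A0. field. apply not_0_INR. lia.
Qed.

Lemma Tlim_diff a b c d phi k u v y : a < b -> c <= y <= d ->
  (forall y, c <= y <= d -> phi (seq_a a b 0) y = phi (seq_a a b 1) y) ->
  a <= u <= seq_a a b 1 -> a <= v <= seq_a a b 1 ->
  Tlim a b phi (pt2 a b k v) y - Tlim a b phi (pt2 a b k u) y
  = (phi v y - phi u y) / INR (S k).
Proof.
  intros Hab Hy Hper Hu Hv.
  rewrite (Tlim_val a b c d phi k) by (try apply pt2_in; assumption).
  rewrite (Tlim_val a b c d phi k (pt2 a b k u)) by (try apply pt2_in; assumption).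
  rewrite !Fn_pt2 by lra. field. apply not_0_INR; lia.
Qed.

Fixpoint rsum_ext_lt (f g : nat -> R) (N : nat) :
  (forall k, (k < N)%nat -> f k = g k) -> rsum f N = rsum g N.
Proof.
  destruct N; intros H. reflexivity.
  cbn [rsum]. rewrite (rsum_ext_lt f g N) by (intros; apply H; lia).
  rewrite H by lia. reflexivity.
Qed.

Lemma rsum_lb (g : nat -> R) : (forall i, 0 <= g i) -> forall N,
  rsum (fun k => g (S (2 * k))) N <= rsum g (S (2 * N)).
Proof.
  intros Hg N. induction N.
  - cbn. specialize (Hg 0%nat). lra.
  - replace (S (2 * S N)) with (S (S (S (2 * N)))) by lia. cbn [rsum].
    cbn [rsum] in IHN. pose proof (Hg (S (2*N))). pose proof (Hg (S (S (2*N)))). lra.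
Qed.

Definition H (N : nat) : R := rsum (fun k => / INR (S k)) N.

Lemma H_exp N : INR N + 1 <= exp (H N).
Proof.
  induction N.
  - unfold H; cbn [rsum]. rewrite exp_0. simpl. lra.
  - unfold H in *; cbn [rsum]. rewrite exp_plus.
    pose proof (exp_ineq1_le (/ INR (S N))).
    rewrite S_INR in *.
    assert (0 < INR N + 1) by (pose proof (pos_INR N); lra).
    assert (0 < / (INR N + 1)) by (apply Rinv_0_lt_compat; lra).
    apply Rle_trans with ((INR N + 1) * (1 + / (INR N + 1))).
    + right. field. lra.
    + apply Rmult_le_compat; lra.
Qed.

Definition pt (a b u v : R) (j : nat) : R :=
  pt2 a b (Nat.div2 j) (if Nat.odd j then v else u).

Lemma odd_double k : Nat.odd (2 * k) = false.
Proof. rewrite Nat.odd_mul. reflexivity. Qed.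

Lemma pt_even a b u v k : pt a b u v (2 * k) = pt2 a b k u.
Proof. unfold pt. rewrite Nat.div2_double, odd_double. reflexivity. Qed.

Lemma pt_odd a b u v k : pt a b u v (S (2 * k)) = pt2 a b k v.
Proof.
  unfold pt. rewrite Nat.div2_succ_double, Nat.odd_succ.
  replace (Nat.even (2 * k)) with true. reflexivity.
  rewrite Nat.even_mul. reflexivity.
Qed.

Lemma pt_mono a b u v j : a < b -> a <= u <= v -> v <= seq_a a b 1 ->
  pt a b u v j <= pt a b u v (S j).
Proof.
  intros Hab Hu Hv. destruct (Nat.Even_or_Odd j) as [[k Hk]|[k Hk]]; subst j.
  - rewrite pt_even, pt_odd. apply pt2_mono; lra.
  - replace (2 * k + 1)%nat with (S (2 * k)) by lia.
    replace (S (S (2 * k))) with (2 * S k)%nat by lia.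
    rewrite pt_even, pt_odd.
    apply Rle_trans with (seq_a a b (S k)).
    + apply pt2_in; lra.
    + apply pt2_in; lra.
Qed.

Lemma pt_range a b u v j : a < b -> a <= u <= v -> v <= seq_a a b 1 ->
  a <= pt a b u v j <= b.
Proof.
  intros Hab Hu Hv. unfold pt.
  assert (forall w, a <= w <= seq_a a b 1 -> a <= pt2 a b (Nat.div2 j) w <= b).
  { intros w Hw. pose proof (pt2_in a b (Nat.div2 j) w Hab Hw).
    pose proof (A_mono a b 0 (Nat.div2 j) Hab (Nat.le_0_l _)).
    pose proof (A_le_b a b (S (Nat.div2 j)) Hab). rewrite A0 in *. lra. }
  destruct (Nat.odd j); apply H0; lra.
Qed.

Theorem mainTheorem9 (a b c d : R) (phi : R -> R -> R) :
  a < b -> c < d ->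
  cont_on_rect phi (seq_a a b 0) (seq_a a b 1) c d ->
  (forall y, c <= y <= d -> phi (seq_a a b 0) y = phi (seq_a a b 1) y) ->
  (exists y0, c <= y0 <= d /\
     exists x1 x2, seq_a a b 0 <= x1 <= seq_a a b 1 /\
                   seq_a a b 0 <= x2 <= seq_a a b 1 /\
                   phi x1 y0 <> phi x2 y0) ->
  ~ arzela_BV (Tlim a b phi) a b c d.
Proof.
  intros Hab Hcd _ Hper [y0 [Hy0 [x1 [x2 [Hx1 [Hx2 Hne]]]]]] [K HK].
  rewrite A0 in Hx1, Hx2.
  assert (Huv : exists u v, a <= u < v /\ v <= seq_a a b 1 /\ phi u y0 <> phi v y0).
  { destruct (Rtotal_order x1 x2) as [Hl|[He|Hl]].
    - exists x1, x2. repeat split; lra || assumption.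
    - subst. congruence.
    - exists x2, x1. repeat split; try lra; try (intro E; apply Hne; symmetry; exact E). }
  destruct Huv as [u [v [Hu [Hv Hneq]]]].
  set (del := Rabs (phi v y0 - phi u y0)).
  assert (Hdel : 0 < del).
  { apply Rabs_pos_lt. intro E. apply Hneq. lra. }
  destruct (INR_unbounded (exp (K / del))) as [N HN].
  set (xs := fun i => if Nat.eqb i 0 then a else if Nat.leb i (2 * N) then pt a b u v (pred i) else b).
  set (ys := fun i => if Nat.eqb i 0 then c else if Nat.leb i (2 * N) then y0 else d).
  assert (Hpt : forall j, a <= pt a b u v j <= b) by (intro; apply pt_range; lra).
  specialize (HK (S (2 * N)) xs ys).
  assert (Hsum := HK).
  clear HK.
  assert (Hm1 : Nat.eqb (S (2 * N)) 0 = false) by reflexivity.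
  assert (Hm2 : Nat.leb (S (2 * N)) (2 * N) = false) by (apply Nat.leb_gt; lia).
  assert (Hb : rsum (fun i => Rabs (Tlim a b phi (xs (S i)) (ys (S i)) - Tlim a b phi (xs i) (ys i))) (S (2 * N)) <= K).
  { apply Hsum.
    - reflexivity.
    - unfold xs. rewrite Hm1, Hm2. reflexivity.
    - reflexivity.
    - unfold ys. rewrite Hm1, Hm2. reflexivity.
    - intros i _. unfold xs.
      destruct (Nat.eqb_spec i 0) as [E|E]; destruct (Nat.eqb_spec (S i) 0) as [E'|E']; try lia.
      + destruct (Nat.leb (S i) (2 * N)); [apply Hpt|lra].
      + destruct (Nat.leb_spec i (2 * N)); destruct (Nat.leb_spec (S i) (2 * N)); try lia.
        * destruct i as [|i]; [lia|]. simpl pred. apply pt_mono; lra.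
        * apply Hpt.
        * lra.
    - intros i _. unfold ys.
      destruct (Nat.eqb_spec i 0) as [E|E]; destruct (Nat.eqb_spec (S i) 0) as [E'|E']; try lia.
      + destruct (Nat.leb (S i) (2 * N)); lra.
      + destruct (Nat.leb_spec i (2 * N)); destruct (Nat.leb_spec (S i) (2 * N)); try lia; lra. }
  clear Hsum.
  pose proof (rsum_lb (fun i => Rabs (Tlim a b phi (xs (S i)) (ys (S i)) - Tlim a b phi (xs i) (ys i)))
                (fun i => Rabs_pos _) N) as Hlb.
  cbv beta in Hlb.
  rewrite (rsum_ext_lt _ (fun k => del * / INR (S k))) in Hlb.
  2:{ intros k Hk.
      assert (E1 : xs (S (S (2 * k))) = pt2 a b k v).
      { unfold xs. replace (Nat.eqb (S (S (2 * k))) 0) with false by reflexivity.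
        replace (Nat.leb (S (S (2 * k))) (2 * N)) with true by (symmetry; apply Nat.leb_le; lia).
        simpl pred. apply pt_odd. }
      assert (E2 : xs (S (2 * k)) = pt2 a b k u).
      { unfold xs. replace (Nat.eqb (S (2 * k)) 0) with false by reflexivity.
        replace (Nat.leb (S (2 * k)) (2 * N)) with true by (symmetry; apply Nat.leb_le; lia).
        simpl pred. apply pt_even. }
      assert (E3 : ys (S (S (2 * k))) = y0).
      { unfold ys. replace (Nat.eqb (S (S (2 * k))) 0) with false by reflexivity.
        replace (Nat.leb (S (S (2 * k))) (2 * N)) with true by (symmetry; apply Nat.leb_le; lia).
        reflexivity. }
      assert (E4 : ys (S (2 * k)) = y0).
      { unfold ys. replace (Nat.eqb (S (2 * k)) 0) with false by reflexivity.
        replace (Nat.leb (S (2 * k)) (2 * N)) with true by (symmetry; apply Nat.leb_le; lia).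
        reflexivity. }
      rewrite E1, E2, E3, E4.
      rewrite (Tlim_diff a b c d) by (assumption || lra).
      unfold Rdiv. rewrite Rabs_mult, Rabs_inv, (Rabs_right (INR (S k))).
      reflexivity. apply Rle_ge, pos_INR. }
  assert (Hs : rsum (fun k => del * / INR (S k)) N = del * H N).
  { unfold H. clear. induction N. cbn. ring. cbn [rsum]. rewrite IHN. ring. }
  rewrite Hs in Hlb.
  pose proof (H_exp N) as HE.
  assert (Hlt : K / del < H N).
  { apply exp_lt_inv. lra. }
  assert (K < del * H N).
  { apply Rmult_lt_compat_l with (r := del) in Hlt; [|lra].
    replace (del * (K / del)) with K in Hlt by (field; lra). exact Hlt. }
  lra.
Qed.
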